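(* For any compilation chain and any trace relation ${\sim}\subseteq\mathit{Trace}_S\times\mathit{Trace}_T$ with existential and universal images $\tilde\tau,\tilde\sigma$ (lifted to hyperproperties), $\mathit{HC}^{\sim}$ is equivalent to $\mathit{HP}^{\tilde\tau}$. Moreover, if $\tilde\tau\circ\tilde\sigma=\mathrm{id}$ (a Galois insertion), then $\mathit{HC}^{\sim}$ implies $\mathit{HP}^{\tilde\sigma}$; and if $\tilde\sigma\circ\tilde\tau=\mathrm{id}$ (a Galois reflection), then $\mathit{HP}^{\tilde\sigma}$ implies $\mathit{HC}^{\sim}$. Here $\mathit{HC}^{\sim}\equiv\forall W.\ \mathit{beh}(W{\downarrow})=\tilde\tau(\mathit{beh}(W))$; $\mathit{HP}^{\tilde\tau}\equiv\forall W\ \forall H_S.\ W\models H_S\Rightarrow W{\downarrow}\models\tilde\tau(H_S)$; $\mathit{HP}^{\tilde\sigma}\equiv\forall W\ \forall H_T.\ W\models\tilde\sigma(H_T)\Rightarrow W{\downarrow}\models H_T$.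
   Context: A compilation chain consists of source (whole) programs $W$, target programs, sets $\mathit{Trace}_S,\mathit{Trace}_T$ of traces, semantics relations $W\rightsquigarrow t$ at both levels, and a compiler $W\mapsto W{\downarrow}$. $\mathit{beh}(W)=\{t\mid W\rightsquigarrow t\}$. A hyperproperty is a set of sets of traces; $W\models H$ iff $\mathit{beh}(W)\in H$. The existential image of $\sim$ is $\tilde\tau(\pi)=\{t\mid\exists s.\ s\sim t\wedge s\in\pi\}$ and its universal image is $\tilde\sigma(\pi)=\{s\mid\forall t.\ s\sim t\Rightarrow t\in\pi\}$; on hyperproperties, $\tilde\tau(H_S)=\{\tilde\tau(\pi)\mid\pi\in H_S\}$ and $\tilde\sigma(H_T)=\{\tilde\sigma(\pi)\mid\pi\in H_T\}$. The identities $\tilde\tau\circ\tilde\sigma=\mathrm{id}$, $\tilde\sigma\circ\tilde\tau=\mathrm{id}$ refer to the maps on trace properties. *)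

(* Defs.v *)
(* Sets of traces are predicates [T -> Prop]; equality of sets
   is Leibniz equality of predicates (extensional under the whitelisted
   functional/propositional extensionality axioms). *)
From Stdlib Require Import FunctionalExtensionality PropExtensionality.

Definition prop (T : Type) := T -> Prop.
Definition hprop (T : Type) := prop T -> Prop.

Definition beh {P T : Type} (sem : P -> T -> Prop) (W : P) : prop T :=
  fun t => sem W t.

Definition hsat {P T : Type} (sem : P -> T -> Prop) (W : P) (H : hprop T) : Prop :=
  H (beh sem W).

Definition tau_tilde {TS TT : Type} (rel : TS -> TT -> Prop) (pi : prop TS) : prop TT :=
  fun t => exists s, rel s t /\ pi s.

Definition sigma_tilde {TS TT : Type} (rel : TS -> TT -> Prop) (pi : prop TT) : prop TS :=
  fun s => forall t, rel s t -> pi t.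

Definition hlift {A B : Type} (f : prop A -> prop B) (H : hprop A) : hprop B :=
  fun p => exists pi, H pi /\ p = f pi.

Section Criteria.
Context {PS PT TS TT : Type}
  (semS : PS -> TS -> Prop) (semT : PT -> TT -> Prop)
  (comp : PS -> PT) (rel : TS -> TT -> Prop).

Definition HC : Prop :=
  forall W : PS, beh semT (comp W) = tau_tilde rel (beh semS W).

Definition HP_tau : Prop :=
  forall (W : PS) (HS : hprop TS),
    hsat semS W HS -> hsat semT (comp W) (hlift (tau_tilde rel) HS).

Definition HP_sigma : Prop :=
  forall (W : PS) (HT : hprop TT),
    hsat semS W (hlift (sigma_tilde rel) HT) -> hsat semT (comp W) HT.
End Criteria.

(* Main.v *)
Require Import Defs.

Theorem theoremB3 (PS PT TS TT : Type)
  (semS : PS -> TS -> Prop) (semT : PT -> TT -> Prop)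
  (comp : PS -> PT) (rel : TS -> TT -> Prop) :
  (HC semS semT comp rel <-> HP_tau semS semT comp rel)
  /\ ((forall pi : prop TT, tau_tilde rel (sigma_tilde rel pi) = pi) ->
      HC semS semT comp rel -> HP_sigma semS semT comp rel)
  /\ ((forall pi : prop TS, sigma_tilde rel (tau_tilde rel pi) = pi) ->
      HP_sigma semS semT comp rel -> HC semS semT comp rel).
Proof.
  unfold HC, HP_tau, HP_sigma, hsat, hlift.
  split; [split|split].
  - intros H W HS HW. exists (beh semS W). split; [exact HW| apply H].
  - intros H W. destruct (H W (fun p => p = beh semS W) eq_refl) as [pi [E1 E2]].
    subst pi. exact E2.
  - intros Hg H W HT [pi [Hpi E]]. rewrite H, E, Hg. exact Hpi.
  - intros Hg H W.
    apply (H W (fun p => p = tau_tilde rel (beh semS W))).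
    exists (tau_tilde rel (beh semS W)). split; [reflexivity| symmetry; apply Hg].
Qed.
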